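(* There is a deterministic max-finding algorithm that, given $n$ elements, uses $O(n)$ comparisons and outputs an element $x$ with $x \ge x^* - \log_2\log_2 n$, where $x^*$ is the maximum value of an input element (i.e., it has error at most $\log_2\log_2 n$).
   Context: Model of imprecise comparisons: there are $n$ elements, each with a fixed unknown real value; we identify an element with its value. Asked to compare $x_i$ and $x_j$, the comparator answers either ''$x_i \ge x_j$'' or ''$x_j \ge x_i$''. If $|x_i-x_j|>1$ the answer is correct; if $|x_i-x_j|\le 1$ the answer is arbitrary (possibly adversarial and adaptive). The guarantee and comparison bound hold for every input and every comparator behaviour consistent with these rules. *)

(* Defs.v *)
From mathcomp Require Import ssreflect ssrfun ssrbool eqtype ssrnat fintype.
From Stdlib Require Import Reals.
Set Implicit Arguments.
Unset Strict Implicit.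
Unset Printing Implicit Defensive.
Open Scope R_scope.

Definition log2 (y : R) : R := ln y / ln 2.

(* A deterministic comparison-based algorithm on n elements (indexed by 'I_n)
   is a decision tree.  [Cmp i j tge tle] asks the comparator about x_i, x_j:
   on answer "x_i >= x_j" it continues with [tge], on answer "x_j >= x_i"
   with [tle].  [Leaf k] outputs element k. *)
Inductive ctree (n : nat) : Type :=
| Leaf : 'I_n -> ctree n
| Cmp : 'I_n -> 'I_n -> ctree n -> ctree n -> ctree n.

(* The answer "x_i >= x_j" is admissible for the imprecise comparator iff it is
   correct or |x_i - x_j| <= 1 (then the answer is arbitrary). *)
Definition admissible_ge (x_i x_j : R) : Prop := Rabs (x_i - x_j) <= 1 \/ x_j <= x_i.

(* [run x t k c]: for input values x, some comparator behaviour consistent with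
   the model (possibly adversarial and adaptive) drives the tree t to output k
   after exactly c comparisons. *)
Inductive run (n : nat) (x : 'I_n -> R) : ctree n -> 'I_n -> nat -> Prop :=
| run_leaf k : run x (Leaf k) k 0
| run_ge i j tge tle k c :
    admissible_ge (x i) (x j) -> run x tge k c -> run x (Cmp i j tge tle) k c.+1
| run_le i j tge tle k c :
    admissible_ge (x j) (x i) -> run x tle k c -> run x (Cmp i j tge tle) k c.+1.

(* Main.v *)
Require Import Defs.
From Stdlib Require Import Reals Lra.
From mathcomp Require Import ssreflect ssrfun ssrbool eqtype ssrnat seq fintype bigop prime div.
From mathcomp Require Import zify.
Set Implicit Arguments. Unset Strict Implicit. Unset Printing Implicit Defensive.
Local Open Scope nat_scope.

Section Prog.
Variable n : nat.
Inductive prog (A : Type) : Type :=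
| Ret : A -> prog A
| Ask : 'I_n -> 'I_n -> (bool -> prog A) -> prog A.
Arguments Ret {A}.

Fixpoint bind A B (p : prog A) (f : A -> prog B) : prog B :=
  match p with Ret a => f a | Ask i j k => Ask i j (fun b => bind (k b) f) end.

Fixpoint toT (p : prog 'I_n) : ctree n :=
  match p with Ret a => Leaf a | Ask i j k => Cmp i j (toT (k true)) (toT (k false)) end.

Variable x : 'I_n -> R.

Fixpoint wp A (p : prog A) (Q : A -> nat -> Prop) : Prop :=
  match p with
  | Ret a => Q a 0
  | Ask i j k => (admissible_ge (x i) (x j) -> wp (k true) (fun a c => Q a c.+1)) /\
                 (admissible_ge (x j) (x i) -> wp (k false) (fun a c => Q a c.+1))
  end.

Lemma wp_mono A (p : prog A) (Q Q' : A -> nat -> Prop) :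
  (forall a c, Q a c -> Q' a c) -> wp p Q -> wp p Q'.
Proof.
elim: p Q Q' => [a|i j k IH] Q Q' H /=; first exact: H.
case=> H1 H2; split=> h.
  by apply: (IH true _ _ _ (H1 h)) => a c; apply: H.
by apply: (IH false _ _ _ (H2 h)) => a c; apply: H.
Qed.

Lemma wp_bind A B (p : prog A) (f : A -> prog B) Q :
  wp p (fun a c1 => wp (f a) (fun b c2 => Q b (c1 + c2))) -> wp (bind p f) Q.
Proof.
elim: p Q => [a|i j k IH] Q /=.
  by apply: wp_mono => b c; rewrite add0n.
case=> H1 H2; split=> h.
  apply: IH; apply: wp_mono (H1 h) => a c1; apply: wp_mono => b c2; by rewrite addSn.
apply: IH; apply: wp_mono (H2 h) => a c1; apply: wp_mono => b c2; by rewrite addSn.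
Qed.

Lemma wp_run (p : prog 'I_n) Q : wp p Q -> forall a c, run x (toT p) a c -> Q a c.
Proof.
elim: p Q => [a|i j k IH] Q /= H b c Hr.
  by inversion Hr; subst.
case: H => H1 H2.
inversion Hr; subst.
  exact: (IH true _ (H1 H7) _ _ H8).
exact: (IH false _ (H2 H7) _ _ H8).
Qed.

Definition ge1 (u v : 'I_n) : Prop := (x v - 1 <= x u)%R.

Lemma adm_ge1 u v : admissible_ge (x u) (x v) -> ge1 u v.
Proof.
rewrite /ge1 /admissible_ge; case=> h; last lra.
have := Rle_abs (x v - x u); rewrite Rabs_minus_sym; lra.
Qed.

Lemma ge1_refl u : ge1 u u.
Proof. rewrite /ge1; lra. Qed.

Definition tab := 'I_n -> 'I_n -> bool.
Definition upd (T : tab) (i j : 'I_n) (b : bool) : tab := fun u v =>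
  if (u == i) && (v == j) then b else if (u == j) && (v == i) then ~~ b else T u v.

Definition goodpair (T : tab) u v :=
  T u v = ~~ T v u /\ (T u v -> ge1 u v) /\ (T v u -> ge1 v u).

Lemma goodpair_ext T T' u v : T' u v = T u v -> T' v u = T v u -> goodpair T u v -> goodpair T' u v.
Proof. by rewrite /goodpair => -> ->. Qed.

Lemma goodpair_sym T u v : goodpair T u v -> goodpair T v u.
Proof. by rewrite /goodpair => -[e [h1 h2]]; split; [rewrite e negbK|split]. Qed.

Fixpoint rr_row (i : 'I_n) (js : seq 'I_n) (T : tab) : prog tab :=
  match js with
  | [::] => Ret T
  | j :: js' => Ask i j (fun b => rr_row i js' (upd T i j b))
  end.

Fixpoint rr (L : seq 'I_n) (T : tab) : prog tab :=
  match L with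
  | [::] => Ret T
  | i :: L' => bind (rr_row i L' T) (fun T' => rr L' T')
  end.

Lemma row_spec i js T : i \notin js ->
  wp (rr_row i js T) (fun T' c => c = size js /\
     (forall u v, ~~ (((u == i) && (v \in js)) || ((v == i) && (u \in js))) -> T' u v = T u v) /\
     (forall j, j \in js -> goodpair T' i j)).
Proof.
elim: js T => [|j js IH] T /=.
  by move=> _; split=> //; split=> // u v; rewrite in_nil.
rewrite in_cons negb_or => /andP[ij ijs].
have key : forall b : bool, (b -> ge1 i j) -> (~~ b -> ge1 j i) ->
  wp (rr_row i js (upd T i j b)) (fun a c => (fun T' c => c = (size js).+1 /\
     (forall u v, ~~ (((u == i) && (v \in j :: js)) || ((v == i) && (u \in j :: js))) -> T' u v = T u v) /\
     (forall j0, j0 \in j :: js -> goodpair T' i j0)) a c.+1).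
  move=> b hb1 hb2; apply: wp_mono (IH _ ijs) => T' c [-> [Hf Hg]]; split=> //; split.
    move=> u v; rewrite !in_cons => H; rewrite Hf; last first.
      apply: contra H; case/orP=> /andP[-> ->]; by rewrite ?orbT.
    rewrite /upd; case: ifP => [/andP[/eqP eu /eqP ev]|_].
      by move: H; rewrite eu ev !eqxx.
    case: ifP => [/andP[/eqP eu /eqP ev]|_] //.
    by move: H; rewrite eu ev !eqxx /= ?orbT.
  move=> j0; rewrite in_cons; case/orP=> [/eqP ->|]; last exact: Hg.
  case jjs: (j \in js); first exact: Hg.
  have e1 : T' i j = b.
    rewrite Hf; first by rewrite /upd !eqxx.
    by rewrite jjs eq_sym (negbTE ij) /= andbF.
  have e2 : T' j i = ~~ b.
    rewrite Hf; first by rewrite /upd eq_sym (negbTE ij) /= !eqxx.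
    by rewrite jjs eq_sym (negbTE ij) /= andbF.
  rewrite /goodpair e1 e2 negbK; split=> //; split=> //.
split=> h.
  by apply: key => // _; exact: adm_ge1.
by apply: key => // _; exact: adm_ge1.
Qed.

Lemma rr_spec L T : uniq L ->
  wp (rr L T) (fun T' c => c <= size L * size L /\
     (forall u v, (u \notin L) || (v \notin L) -> T' u v = T u v) /\
     (forall u v, u \in L -> v \in L -> u != v -> goodpair T' u v)).
Proof.
elim: L T => [|i L IH] T /=.
  by move=> _; split=> //; split=> // u v; rewrite in_nil.
case/andP=> iL uL; apply: wp_bind; apply: wp_mono (row_spec T iL) => T1 c1 [-> [F1 G1]].
apply: wp_mono (IH T1 uL) => T2 c2 [hc [F2 G2]]; split; first by move: (size L) hc => s hc; rewrite mulSn mulnS; lia.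
split.
  move=> u v; rewrite !in_cons !negb_or => H; rewrite F2; last first.
    by case/orP: H => /andP[_ ->]; rewrite ?orbT.
  apply: F1; case/orP: H => /andP[h1 h2]; rewrite (negbTE h1) (negbTE h2) /= ?andbF //.
move=> u v; rewrite !in_cons => /orP[/eqP eu|uL'] /orP[/eqP ev|vL'] uv.
- by rewrite eu ev eqxx in uv.
- by subst u; apply: goodpair_ext (G1 _ vL'); rewrite F2 // iL ?orbT.
- by subst v; apply: goodpair_sym; apply: goodpair_ext (G1 _ uL'); rewrite F2 // iL ?orbT.
- exact: G2.
Qed.
End Prog.

Section Comb.
Variable n : nat.
Local Notation tab := (tab n).
Implicit Types (T : tab) (R s : seq 'I_n).

Definition anti T R := forall u v, u \in R -> v \in R -> u != v -> T u v = ~~ T v u.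

Definition wins T R (u : 'I_n) := count (fun v => (v != u) && T u v) R.

Lemma sumn_addE (f g : 'I_n -> nat) s :
  sumn (map (fun u => f u + g u) s) = sumn (map f s) + sumn (map g s).
Proof. elim: s => //= a s ->; lia. Qed.

Lemma sumn_countE (P : pred 'I_n) s : sumn (map (fun u => nat_of_bool (P u)) s) = count P s.
Proof. by elim: s => //= a s ->. Qed.

Lemma sum_wins T R : uniq R -> anti T R ->
  2 * sumn (map (wins T R) R) = size R * (size R).-1.
Proof.
rewrite /wins.
have gen : forall R0, uniq R0 -> anti T R0 ->
   2 * sumn (map (fun u => count (fun v => (v != u) && T u v) R0) R0) = size R0 * (size R0).-1.
  elim=> [|a L IH] //= /andP[aR uR] an.
  have anR : anti T L by move=> u v hu hv; apply: an; rewrite in_cons ?hu ?hv orbT.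
  have e1 : map (fun u => ((a != u) && T u a) + count (fun v => (v != u) && T u v) L) L =
            map (fun u => nat_of_bool (T u a) + count (fun v => (v != u) && T u v) L) L.
    apply/eq_in_map => u uL; congr (_ + _).
    by have -> : (a != u) by apply/eqP => e; rewrite e uL in aR.
  rewrite e1 sumn_addE sumn_countE eqxx /=.
  have e2 : count (fun v => (v != a) && T a v) L = count (T a) L.
    apply: eq_in_count => v vR.
    by have -> : (v != a) by apply/eqP => e; rewrite -e vR in aR.
  have e3 : count (fun u => T u a) L = count (predC (T a)) L.
    apply: eq_in_count => v vR /=; apply: an; rewrite ?in_cons ?vR ?eqxx ?orbT //.
    by apply/eqP => e; rewrite -e vR in aR.
  rewrite e2 e3.
  have := count_predC (T a) L.
  have := IH uR anR.
  move: (size L) (count (T a) L) (count (predC (T a)) L)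
        (sumn (map (fun u => count (fun v => (v != u) && T u v) L) L)) => sz c1 c2 S h1 h2.
  nia.
exact: gen.
Qed.

Fixpoint amax (f : 'I_n -> nat) (a : 'I_n) s : 'I_n :=
  match s with
  | [::] => a
  | y :: s' => let b := amax f a s' in if f b <= f y then y else b
  end.

Lemma amax_in f a s : amax f a s \in a :: s.
Proof.
elim: s => [|y s IH] /=; first by rewrite mem_head.
case: ifP => _; first by rewrite !in_cons eqxx orbT.
by move: IH; rewrite !in_cons; case/orP=> ->; rewrite ?orbT.
Qed.

Lemma amax_max f a s v : v \in a :: s -> f v <= f (amax f a s).
Proof.
elim: s v => [|y s IH] v /=; first by rewrite in_cons in_nil orbF => /eqP ->.
rewrite !in_cons; case: ifP => h.
  case/or3P => [/eqP ->|/eqP ->|vs] //.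
    apply: (leq_trans _ h); apply: IH; exact: mem_head.
  apply: (leq_trans _ h); apply: IH; by rewrite in_cons vs orbT.
case/or3P => [/eqP ->|/eqP ->|vs].
- apply: IH; exact: mem_head.
- by move/negbT: h; rewrite -ltnNge => /ltnW.
- apply: IH; by rewrite in_cons vs orbT.
Qed.

Lemma count_split (p q : pred 'I_n) s :
  count (fun v => p v && q v) s + count (fun v => p v && ~~ q v) s = count p s.
Proof. elim: s => //= a s IH; case: (p a); case: (q a) => /=; lia. Qed.

Lemma count_sub_in (p q : pred 'I_n) s :
  (forall v, v \in s -> p v -> q v) -> count p s <= count q s.
Proof.
elim: s => //= a s IH H.
have H' : forall v, v \in s -> p v -> q v by move=> v vs; apply: H; rewrite in_cons vs orbT.
have := IH H'; case pa: (p a); last by case: (q a) => /=; lia.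
by rewrite (H a (mem_head _ _) pa) /=; lia.
Qed.

Lemma sumn_le_max (f : 'I_n -> nat) s M :
  (forall v, v \in s -> f v <= M) -> sumn (map f s) <= size s * M.
Proof.
elim: s => //= a s IH H.
have := H a (mem_head _ _).
have H' : forall v, v \in s -> f v <= M by move=> v vs; apply: H; rewrite in_cons vs orbT.
have := IH H'.
rewrite mulSn; lia.
Qed.

Lemma anti_sub T R R' : {subset R' <= R} -> anti T R -> anti T R'.
Proof. by move=> sub an u v hu hv; apply: an; apply: sub. Qed.

Lemma amax_wins_half T a s : uniq (a :: s) -> anti T (a :: s) ->
  (size (a :: s)).-1 <= 2 * wins T (a :: s) (amax (wins T (a :: s)) a s).
Proof.
move=> u an.
have h1 := sum_wins u an.
have h2 : sumn (map (wins T (a :: s)) (a :: s)) <= size (a :: s) * wins T (a :: s) (amax (wins T (a :: s)) a s).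
  by apply: sumn_le_max => v vs; apply: amax_max.
move: h1 h2; set S := sumn _; set w := wins _ _ _; set z := size _.
rewrite /z /= => h1 h2.
move: (size s) S w h1 h2 => m S w; nia.
Qed.

Definition dfilt T (u : 'I_n) R := [seq v <- R | (v != u) && ~~ T u v].
Arguments dfilt : simpl never.

Fixpoint domf T (fuel : nat) R : seq 'I_n :=
  match fuel with
  | 0 => [::]
  | f.+1 =>
    match R with
    | [::] => [::]
    | a :: s => let u := amax (wins T R) a s in
                u :: domf T f (dfilt T u R)
    end
  end.

Lemma dom_sub T fuel R : {subset domf T fuel R <= R}.
Proof.
elim: fuel R => [|f IH] [|a s] //= v.
rewrite in_cons; case/orP=> [/eqP ->|]; first exact: amax_in.
by move/IH; rewrite /dfilt mem_filter => /andP[_].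
Qed.

Lemma filter_lt (p : pred 'I_n) R u : u \in R -> ~~ p u -> size (filter p R) < size R.
Proof.
move=> uR pu; rewrite size_filter -(count_predC p R).
have : 0 < count (predC p) R by rewrite -has_count; apply/hasP; exists u.
lia.
Qed.

Lemma dom_cover T fuel R : size R <= fuel ->
  forall y, y \in R -> exists z, z \in domf T fuel R /\ (z = y \/ T z y).
Proof.
elim: fuel R => [|f IH] [|a s] //= hs y yR.
set u := amax _ a s.
case: (y =P u) => [->|yu]; first by exists u; rewrite mem_head; split=> //; left.
case tuy: (T u y); first by exists u; rewrite mem_head; split=> //; right.
have hlt := @filter_lt (fun v => (v != u) && ~~ T u v) (a :: s) u (amax_in _ _ _).
have hsz : size (dfilt T u (a :: s)) <= f.
  move: hlt; rewrite eqxx /= => hlt; move: hs hlt.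
  rewrite /dfilt; move: (size _) (size s) => p q; lia.
have yin : y \in dfilt T u (a :: s).
  by rewrite /dfilt mem_filter tuy yR /= !andbT; apply/eqP.
have [z [zin H]] := IH (dfilt T u (a :: s)) hsz y yin.
exists z; split=> //; by rewrite in_cons zin orbT.
Qed.

Lemma dom_size T fuel R : uniq R -> anti T R -> size R <= fuel ->
  2 ^ size (domf T fuel R) <= (2 * size R).+1.
Proof.
elim: fuel R => [|f IH] [|a s] // uR an hs.
rewrite /=; move: hs => /= hs.
set u := amax _ a s.
set R' := dfilt T u (a :: s).
have uR' : uniq R' by apply: filter_uniq.
have anR' : anti T R' by apply: anti_sub an => v; rewrite /R' /dfilt mem_filter => /andP[_].
have hlt := @filter_lt (fun v => (v != u) && ~~ T u v) (a :: s) u (amax_in _ _ _).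
have hsR' : size R' <= f.
  move: hlt; rewrite eqxx /= => hlt; move: hs hlt; rewrite /R' /dfilt.
  move: (size _) (size s) => p q; lia.
have IH' := IH R' uR' anR' hsR'.
have hw := amax_wins_half uR an.
have hc := count_split (fun v => v != u) (T u) (a :: s).
have hu : count (predC (pred1 u)) (a :: s) = size s.
  have := count_predC (pred1 u) (a :: s).
  rewrite (count_uniq_mem _ uR) amax_in /=; lia.
have e : count (fun v => v != u) (a :: s) = size s by rewrite -hu.
rewrite -/u in hw.
have hsz : size R' = count (fun v => (v != u) && ~~ T u v) (a :: s) by rewrite /R' /dfilt size_filter.
move: hw hc e hsz IH'; rewrite /wins -/u expnS /=.
set m := size s; set P := 2 ^ _; set r := size R'; clearbody m P r.
move: (count _ _) (count _ _) (count _ _) => c1 c2 c3.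
lia.
Qed.

Lemma king_spec T a s y : uniq (a :: s) -> anti T (a :: s) ->
  let u := amax (wins T (a :: s)) a s in
  y \in a :: s -> y != u ->
  T u y \/ exists z, [/\ z \in a :: s, z != u, z != y, T u z & T z y].
Proof.
move=> uR an u yR yu.
case tuy: (T u y); first by left.
right.
case hh: (has (fun z => [&& z != u, z != y, T u z & T z y]) (a :: s)).
  by case/hasP: hh => z zR /and4P[h1 h2 h3 h4]; exists z.
exfalso.
have uR' : u \in a :: s by apply: amax_in.
have tyu : T y u by rewrite (an y u yR uR' yu) tuy.
have hA : count (predU (fun v => (v != u) && T u v) (pred1 u)) (a :: s) <=
          wins T (a :: s) y.
  apply: count_sub_in => v vR /orP[/andP[vu tuv]|/eqP ->].
  - have vy : v != y by apply/eqP => e; rewrite e tuy in tuv.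
    have := hasPn (negbT hh) v vR; rewrite /= vu vy tuv /= => ntvy.
    have yv : y != v by rewrite eq_sym.
    by rewrite (an y v yR vR yv) ntvy.
  - by rewrite eq_sym yu tyu.
have hI : count (predI (fun v => (v != u) && T u v) (pred1 u)) (a :: s) = 0.
  by apply/eqP; rewrite -leqn0 -(count_pred0 (a :: s)); apply: sub_count => v /= /andP[/andP[h _] /eqP e]; by rewrite e eqxx in h.
have := count_predUI (fun v => (v != u) && T u v) (pred1 u) (a :: s).
rewrite hI (count_uniq_mem _ uR) uR' addn0 => e.
have := amax_max (wins T (a :: s)) yR.
rewrite -/u /wins in hA *; lia.
Qed.
End Comb.

Section Algo.
Variable n : nat.
Variable x : 'I_n -> R.
Local Notation tab := (tab n).
Local Notation wp := (wp x).
Local Notation ge1 := (ge1 x).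

Definition T0 : tab := fun _ _ => false.

Definition grp (G : seq 'I_n) : prog n (seq 'I_n) :=
  let L := undup G in bind (rr L T0) (fun T => Ret n (domf T (size L) L)).

Lemma good_anti T (L : seq 'I_n) : (forall u v, u \in L -> v \in L -> u != v -> goodpair x T u v) -> anti T L.
Proof. by move=> H u v hu hv uv; case: (H u v hu hv uv). Qed.

Lemma good_ge1 T (L : seq 'I_n) u v : (forall u v, u \in L -> v \in L -> u != v -> goodpair x T u v) ->
  u \in L -> v \in L -> (u = v \/ T u v) -> ge1 u v.
Proof.
move=> H hu hv; case: (u =P v) => [-> _|uv]; first exact: ge1_refl.
case=> // tuv; have [_ [h _]] := H u v hu hv (introN eqP uv); exact: h.
Qed.

Lemma grp_spec G :
  wp (grp G) (fun D c => c <= size G * size G /\ 2 ^ size D <= (2 * size G).+1 /\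
     (forall y, y \in G -> exists z, z \in D /\ ge1 z y) /\ {subset D <= G}).
Proof.
rewrite /grp; apply: wp_bind.
apply: wp_mono (rr_spec x T0 (undup_uniq G)) => T c [hc [_ hg]] /=.
have hs := size_undup G.
split; first by rewrite addn0; apply: (leq_trans hc); apply: leq_mul.
split.
  apply: (leq_trans (dom_size (undup_uniq G) (good_anti hg) (leqnn _))).
  by rewrite ltnS leq_mul2l hs orbT.
split.
  move=> y yG; have yL : y \in undup G by rewrite mem_undup.
  have [z [zD hz]] := dom_cover T (leqnn _) yL.
  exists z; split=> //; apply: (good_ge1 hg) => //; exact: (dom_sub zD).
by move=> z /dom_sub; rewrite mem_undup.
Qed.

Fixpoint stageG (Gs : seq (seq 'I_n)) : prog n (seq 'I_n) :=
  match Gs with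
  | [::] => Ret n [::]
  | G :: Gs' => bind (grp G) (fun D => bind (stageG Gs') (fun D' => Ret n (D ++ D')))
  end.

Lemma exp_small a h : 2 ^ a <= (2 ^ h.+1).+1 -> a <= h.+1.
Proof.
move=> H; rewrite leqNgt; apply/negP => lt.
have : 2 ^ h.+2 <= 2 ^ a by rewrite leq_exp2l.
have : 2 <= 2 ^ h.+1 by rewrite -{1}(expn1 2) leq_exp2l.
rewrite [2 ^ h.+2]expnS; lia.
Qed.

Lemma stageG_spec h Gs : all (fun G => size G <= 2 ^ h) Gs ->
  wp (stageG Gs) (fun S' c => c <= 2 ^ h * size (flatten Gs) /\ size S' <= h.+1 * size Gs /\
     (forall y, y \in flatten Gs -> exists z, z \in S' /\ ge1 z y)).
Proof.
elim: Gs => [|G Gs IH] /=; first by move=> _; split=> //; split=> //.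
case/andP=> hG hGs; apply: wp_bind; apply: wp_mono (grp_spec G) => D c1 [hc1 [hD [hcov _]]].
apply: wp_bind; apply: wp_mono (IH hGs) => S' c2 [hc2 [hS' hcov']] /=.
split.
  rewrite size_cat mulnDr addn0; apply: leq_add => //.
  by apply: (leq_trans hc1); rewrite leq_mul2r hG orbT.
split.
  rewrite size_cat mulnS; apply: leq_add => //.
  apply: exp_small; apply: (leq_trans hD); rewrite ltnS expnS; lia.
move=> y; rewrite mem_cat => /orP[yG|yGs].
  by have [z [zD h1]] := hcov y yG; exists z; rewrite mem_cat zD.
by have [z [zD h1]] := hcov' y yGs; exists z; rewrite mem_cat zD orbT.
Qed.

Fixpoint chunks (g fuel : nat) (s : seq 'I_n) : seq (seq 'I_n) :=
  match fuel with
  | 0 => [:: s]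
  | f.+1 => if size s <= g then [:: s] else take g s :: chunks g f (drop g s)
  end.

Lemma chunks_flatten g f s : flatten (chunks g f s) = s.
Proof.
elim: f s => [|f IH] s /=; first by rewrite cats0.
by case: ifP => _ /=; rewrite ?cats0 // IH cat_take_drop.
Qed.

Lemma chunks_spec g f s : 0 < g -> size s <= f ->
  all (fun G => size G <= g) (chunks g f s) /\ g * (size (chunks g f s)).-1 <= size s.
Proof.
move=> g0; elim: f s => [|f IH] s /=.
  by rewrite leqn0 => /eqP ->; rewrite muln0; split=> //; rewrite andbT.
move=> hs; case: ifP => hg /=; first by rewrite hg muln0.
have hd : size (drop g s) <= f by rewrite size_drop; move/negbT: hg; rewrite -ltnNge; lia.
have [h1 h2] := IH _ hd.
rewrite size_take; move/negbT: hg; rewrite -ltnNge => hg.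
rewrite hg leqnn h1; split=> //.
move: h2; rewrite size_drop.
case: (chunks g f (drop g s)) => [|c cs] /=; rewrite ?muln0 ?mulnS; lia.
Qed.

Definition stage (h : nat) (S : seq 'I_n) : prog n (seq 'I_n) :=
  stageG (chunks (2 ^ h) (size S) S).

Lemma stage_spec h S :
  wp (stage h S) (fun S' c => c <= 2 ^ h * size S /\
     size S' * 2 ^ h <= h.+1 * (size S + 2 ^ h) /\
     (forall y, y \in S -> exists z, z \in S' /\ ge1 z y)).
Proof.
have g0 : 0 < 2 ^ h by rewrite expn_gt0.
rewrite /stage.
have [ha hq] := chunks_spec g0 (leqnn (size S)).
have hf := chunks_flatten (2 ^ h) (size S) S.
move: ha hq hf; set Gs := chunks _ _ _ => ha hq hf.
apply: wp_mono (stageG_spec ha) => S' c [hc [hs hcov]].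
rewrite hf in hc hcov; split=> //; split=> //.
move: hs hq; move: (size Gs) (size S') (size S) (2 ^ h) g0 => q s' sz P P0.
case: q => [|q] /=; nia.
Qed.

Lemma sub2_le (r : R) : (r - 2 <= r)%R. Proof. lra. Qed.
Lemma le_chain1 (a b : R) : (b - 1 <= a)%R -> (b - 2 <= a)%R. Proof. lra. Qed.
Lemma le_chain2 (a b c : R) : (c - 1 <= b)%R -> (b - 1 <= a)%R -> (c - 2 <= a)%R. Proof. lra. Qed.

Definition king (d : 'I_n) (S : seq 'I_n) : prog n 'I_n :=
  match undup S with
  | [::] => Ret n d
  | a :: s => bind (rr (a :: s) T0) (fun T => Ret n (amax (wins T (a :: s)) a s))
  end.

Lemma king_prog_spec d S :
  wp (king d S) (fun w c => c <= size S * size S /\ forall y, y \in S -> (x y - 2 <= x w)%R).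
Proof.
rewrite /king.
have hsz := size_undup S.
have hu := undup_uniq S.
case e: (undup S) => [|a s] /=.
  by split=> // y; rewrite -mem_undup e.
rewrite e in hu hsz.
apply: wp_bind; apply: wp_mono (rr_spec x T0 hu) => T c [hc [_ hg]] /=.
split; first by rewrite addn0; apply: (leq_trans hc); apply: leq_mul.
move=> y; rewrite -mem_undup e => yR.
have uR := amax_in (wins T (a :: s)) a s.
case: (y =P amax (wins T (a :: s)) a s) => [->|yu]; first exact: sub2_le.
case: (king_spec hu (good_anti hg) yR (introN eqP yu)) => [tuy|[z [zR zu zy tuz tzy]]].
  apply: le_chain1; exact: (good_ge1 hg uR yR (or_intror tuy)).
apply: le_chain2 (good_ge1 hg zR yR (or_intror tzy)) (good_ge1 hg uR zR (or_intror tuz)).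
Qed.
End Algo.
Definition sig t := 16 * 2 ^ t + 2 * t - 16.
Definition hh t := 16 * 2 ^ t + t + 8.

Lemma exp_ge1 t : 1 <= 2 ^ t. Proof. by rewrite expn_gt0. Qed.

Lemma sig_hh t : sig t + hh t = sig t.+1 + (t + 6).
Proof. rewrite /sig /hh expnS; have := exp_ge1 t; lia. Qed.

Lemma sig_le t : sig t <= sig t.+1.
Proof. rewrite /sig expnS; have := exp_ge1 t; lia. Qed.

Lemma hh_le t : (hh t).+1 <= 2 ^ (t + 6).
Proof.
rewrite /hh expnD.
have : t.+1 <= 2 ^ t by apply: ltn_expl.
have := exp_ge1 t; lia.
Qed.

Lemma size_step n t l l' :
  l * 2 ^ sig t <= n + 2 ^ (t + 6 + sig t) ->
  l' * 2 ^ hh t <= (hh t).+1 * (l + 2 ^ hh t) ->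
  l' * 2 ^ sig t.+1 <= n + 2 ^ (t.+1 + 6 + sig t.+1).
Proof.
move=> H1 H2.
have e1 : 2 ^ hh t * 2 ^ sig t = 2 ^ sig t.+1 * 2 ^ (t + 6) by rewrite -!expnD addnC sig_hh.
have e2 : 2 ^ (t + 6 + sig t) = 2 ^ (t + 6) * 2 ^ sig t by rewrite expnD.
have e3 : 2 ^ (t.+1 + 6 + sig t.+1) = 2 * (2 ^ (t + 6) * 2 ^ sig t.+1) by rewrite !addSn expnS expnD.
have hA : 2 ^ sig t <= 2 ^ sig t.+1 by rewrite leq_exp2l // sig_le.
have hP := hh_le t.
rewrite e2 in H1; rewrite e3.
have P0 : 0 < 2 ^ (t + 6) by rewrite expn_gt0.
rewrite -(leq_pmul2r P0).
move: H1 H2 e1 hA hP P0.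
move: (hh t) (2 ^ hh t) (2 ^ sig t) (2 ^ sig t.+1) (2 ^ (t + 6)) => h Hh A Q P.
move=> H1 H2 e1 hA hP P0.
have H3 := leq_mul H2 (leqnn A); rewrite -[h.+1 * _ * A]mulnA mulnDl in H3.
have s1 : l' * Q * P = l' * Hh * A by rewrite -!mulnA e1.
have s2 : l * A + Hh * A <= n + P * A + Q * P by rewrite e1; lia.
have s3 : h.+1 * (l * A + Hh * A) <= P * (n + P * A + Q * P) by apply: leq_mul.
have s4 : P * A <= P * Q by rewrite leq_mul2l hA orbT.
rewrite s1; apply: (leq_trans H3); apply: (leq_trans s3).
rewrite mulnC !mulnDl.
have s5 : P * A * P <= P * Q * P := leq_mul s4 (leqnn P).
have s6 : Q * P * P = P * Q * P by rewrite [Q * P]mulnC.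
rewrite s6; lia.
Qed.

Lemma exp_lin t : 3 * t + 14 <= 16 * 2 ^ t.
Proof. have : t.+1 <= 2 ^ t by apply: ltn_expl. lia. Qed.

Definition K1 := 2 ^ 24 + 1.
Definition K2 := 2 ^ 33 + 2.

Lemma cost_step n k t l c : t + 5 <= k -> 2 ^ (2 ^ k) <= n ->
  l * 2 ^ sig t <= n + 2 ^ (t + 6 + sig t) -> c <= 2 ^ hh t * l ->
  c * 2 ^ t <= K1 * n.
Proof.
rewrite /K1; move=> tk hn H1 H2.
have e1 : 2 ^ hh t * 2 ^ t = 2 ^ 24 * 2 ^ sig t.
  rewrite -!expnD; congr (2 ^ _); rewrite /hh /sig; have := exp_ge1 t; lia.
have e2 : 2 ^ 24 * 2 ^ (t + 6 + sig t) <= n.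
  apply: leq_trans hn; rewrite -expnD leq_exp2l //.
  have : 2 ^ (t + 5) <= 2 ^ k by rewrite leq_exp2l.
  rewrite expnD /sig; have := exp_lin t; have := exp_ge1 t; lia.
have s1 : c * 2 ^ t <= 2 ^ 24 * (l * 2 ^ sig t).
  apply: (leq_trans (leq_mul H2 (leqnn _))).
  by rewrite mulnAC e1 -mulnA [l * _]mulnC.
apply: (leq_trans s1); move: H1 e2.
move: (2 ^ 24) (l * 2 ^ sig t) (2 ^ (t + 6 + sig t)) => E L F H1 e2.
have := leq_mul (leqnn E) H1; rewrite mulnDr; lia.
Qed.

Lemma king_bound n k l : 8 <= k -> 2 ^ (2 ^ k) <= n -> n < 2 ^ (2 * 2 ^ k) ->
  l * 2 ^ sig (k - 4) <= n + 2 ^ (k - 4 + 6 + sig (k - 4)) ->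
  l * l <= K2 * n.
Proof.
rewrite /K2; move=> k8 hn hn2 H.
set T := k - 4 in H.
have eT : 16 * 2 ^ T = 2 ^ k by rewrite /T -(expnD 2 4); congr (2 ^ _); lia.
have eA : 2 ^ sig T * 2 ^ 16 = 2 ^ (2 ^ k) * 2 ^ (2 * T).
  rewrite -!expnD; congr (2 ^ _); rewrite /sig eT.
  have : 2 ^ 4 <= 2 ^ k by rewrite leq_exp2l //; lia.
  lia.
have eG : 2 ^ (T + 6 + sig T) = 2 ^ (T + 6) * 2 ^ sig T by rewrite expnD.
have hG : 2 ^ (T + 6) * 2 ^ (T + 6) <= n.
  apply: leq_trans hn; rewrite -expnD leq_exp2l //.
  have : 8 * (k - 2) <= 2 ^ k.
    elim: k k8 {H eT eA eG hn2 T} => // k IH; rewrite leq_eqVlt => /orP[/eqP <- //|].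
    rewrite ltnS => hk; have := IH hk; rewrite expnS; lia.
  rewrite /T; lia.
rewrite eG in H.
have V0 : 0 < 2 ^ (2 * T) by rewrite expn_gt0.
have W0 : 0 < 2 ^ (2 ^ k) by rewrite expn_gt0.
move: H eA hG hn2 V0 W0.
have eW : 2 ^ (2 * 2 ^ k) = 2 ^ (2 ^ k) * 2 ^ (2 ^ k) by rewrite -expnD addnn -mul2n.
rewrite eW.
move: (2 ^ sig T) (2 ^ (2 ^ k)) (2 ^ (2 * T)) (2 ^ (T + 6)) => A W V G H eA hG hn2 V0 W0.
have s1 : l * W * V <= (2 ^ 16 * n + G * W) * V.
  have := leq_mul H (leqnn (2 ^ 16)).
  rewrite mulnDl -!mulnA eA.
  have : 2 ^ 16 * n <= 2 ^ 16 * n * V by rewrite -{1}(muln1 (2 ^ 16 * n)) leq_mul2l V0 orbT.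
  move: (2 ^ 16) => Z; nia.
have s2 : l * W <= 2 ^ 16 * n + G * W by rewrite -(leq_pmul2r V0).
have s3 : (l * W) * (l * W) <= 2 * ((2 ^ 16 * n) * (2 ^ 16 * n)) + 2 * ((G * W) * (G * W)).
  apply: (leq_trans (leq_mul s2 s2)).
  move: (2 ^ 16 * n) (G * W) => a b.
  case: (leqP a b) => hab.
    rewrite -(subnKC hab); move: (b - a) => d; nia.
  move/ltnW: hab => hab; rewrite -(subnKC hab); move: (a - b) => d; nia.
have s4 : n * n <= n * (W * W) by rewrite leq_mul2l; apply/orP; right; apply: ltnW.
have WW : 0 < W * W by rewrite muln_gt0 W0.
rewrite -(leq_pmul2r WW).
have e16 : 2 ^ 33 = 2 * (2 ^ 16 * 2 ^ 16) by rewrite -expnD -expnS.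
rewrite e16.
move: s3 s4 hG; move: (2 ^ 16) => Z s3 s4 hG.
nia.
Qed.

Opaque K1 K2.

Section Stages.
Variable n : nat.
Variable x : 'I_n -> R.
Variable d : 'I_n.

Fixpoint stages (m t : nat) (S : seq 'I_n) : prog n 'I_n :=
  match m with
  | 0 => king d S
  | m'.+1 => bind (stage (hh t) S) (fun S' => stages m' t.+1 S')
  end.

Lemma stages_spec k m t S : 8 <= k -> 2 ^ (2 ^ k) <= n -> n < 2 ^ (2 * 2 ^ k) ->
  t + m = k - 4 -> size S * 2 ^ sig t <= n + 2 ^ (t + 6 + sig t) ->
  wp x (stages m t S) (fun w c => (forall y, y \in S -> (x y - (INR m + 2) <= x w)%R) /\
     c * 2 ^ t <= 2 * (K1 * n) + K2 * n * 2 ^ t).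
Proof.
move=> k8 hn hn2; elim: m t S => [|m IH] t S htm hS.
  apply: wp_mono (king_prog_spec x d S) => w c [hc herr]; split.
    by move=> y yS; have := herr y yS; rewrite /=; lra.
  rewrite addn0 in htm; rewrite htm in hS.
  have hk := king_bound k8 hn hn2 hS.
  have := leq_mul (leq_trans hc hk) (leqnn (2 ^ t)).
  move: (2 ^ t) => P; lia.
apply: wp_bind; apply: wp_mono (stage_spec x (hh t) S) => S' c1 [hc1 [hs hcov]].
have hS' := size_step hS hs.
have htm' : t.+1 + m = k - 4 by rewrite addSn -addnS.
apply: wp_mono (IH t.+1 S' htm' hS') => w c2 [herr hc2]; split.
  move=> y yS; have [z [zS hz]] := hcov y yS; have := herr z zS.
  rewrite /ge1 in hz; rewrite S_INR; lra.
have t5 : t + 5 <= k by move: htm k8; lia.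
have hc1' := cost_step t5 hn hS hc1.
move: hc2; rewrite expnS.
move: hc1'; move: (2 ^ t) => P; nia.
Qed.
End Stages.
Lemma expn_pow m k : expn m k = Nat.pow m k.
Proof. elim: k => // k IH; by rewrite expnS IH /= multE. Qed.

Lemma INR_exp2 m : INR (2 ^ m) = (2 ^ m)%R.
Proof. by rewrite expn_pow pow_INR. Qed.

Lemma ln_le' (a b : R) : (0 < a)%R -> (a <= b)%R -> (ln a <= ln b)%R.
Proof.
move=> a0 ab; case: (Rle_lt_or_eq_dec _ _ ab) => h.
  by apply: Rlt_le; apply: ln_increasing.
by rewrite h; apply: Rle_refl.
Qed.

Lemma ln2_pos : (0 < ln 2)%R.
Proof. have := ln_lt_2; lra. Qed.

Lemma log2_ge (m : nat) (y : R) : (2 ^ m <= y)%R -> (INR m <= log2 y)%R.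
Proof.
move=> h.
have p0 : (0 < 2 ^ m)%R by apply: pow_lt; lra.
have := @ln_le' _ _ p0 h; rewrite ln_pow; last lra.
rewrite /log2 => h2.
have l2 := ln2_pos.
apply: (Rmult_le_reg_r (ln 2)) => //.
rewrite /Rdiv Rmult_assoc Rinv_l; last lra.
by rewrite Rmult_1_r.
Qed.

Lemma loglog_ge (n k : nat) : 2 ^ (2 ^ k) <= n -> (INR k <= log2 (log2 (INR n)))%R.
Proof.
move=> h.
apply: log2_ge.
rewrite -INR_exp2.
apply: log2_ge.
rewrite -INR_exp2.
by apply: le_INR; apply/leP.
Qed.

Lemma main_nat (n : nat) : 2 ^ (2 ^ 8) <= n ->
  exists k, [/\ 8 <= k, 2 ^ (2 ^ k) <= n & n < 2 ^ (2 * 2 ^ k)].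
Proof.
move=> hN.
have n0 : 0 < n by apply: leq_trans hN; rewrite expn_gt0.
have /andP[hL1 hL2] := @trunc_log_bounds 2 n (erefl true) n0.
move: hL1 hL2; set L := trunc_log 2 n => hL1 hL2.
have L8 : 2 ^ 8 <= L by apply: trunc_log_max.
have L0 : 0 < L by apply: leq_trans L8; rewrite expn_gt0.
have /andP[hk1 hk2] := @trunc_log_bounds 2 L (erefl true) L0.
move: hk1 hk2; set k := trunc_log 2 L => hk1 hk2.
exists k; split.
- exact: trunc_log_max.
- apply: leq_trans hL1; by rewrite leq_exp2l.
- apply: (leq_trans hL2); rewrite leq_exp2l // -[2 * _]/(2 ^ 1 * 2 ^ k) -expnD; exact: hk2.
Qed.

Local Open Scope R_scope.

Theorem mainTheorem7 :
  exists (C : R) (N : nat), forall n : nat, leq N n ->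
    exists t : ctree n, forall (x : 'I_n -> R) (k : 'I_n) (c : nat),
      run x t k c ->
      INR c <= C * INR n /\
      (forall j : 'I_n, x j - log2 (log2 (INR n)) <= x k).
Proof.
exists (INR (2 * K1 + K2)), (2 ^ (2 ^ 8))%nat.
move=> n hN.
have [k [k8 hn hn2]] := main_nat hN.
have n0 : (0 < n)%nat by apply: leq_trans hn; rewrite expn_gt0.
pose d : 'I_n := Ordinal n0.
exists (toT (stages d (k - 4) 0 (enum 'I_n))).
move=> x w c hr.
have hS : (size (enum 'I_n) * 2 ^ sig 0 <= n + 2 ^ (0 + 6 + sig 0))%nat.
  rewrite size_enum_ord /sig expn0; lia.
have htm : (0 + (k - 4) = k - 4)%nat by rewrite add0n.
have [herr hc] := wp_run (stages_spec x d k8 hn hn2 htm hS) hr.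
split.
  rewrite -mult_INR; apply: le_INR; apply/leP.
  move: hc; rewrite expn0 !muln1 multE; lia.
move=> j.
have := herr j (mem_enum _ j).
have := loglog_ge hn.
have e : (INR (k - 4) + 2 <= INR k)%R.
  have -> : (2 = INR 2)%R by rewrite /=; lra.
  rewrite -plus_INR; apply: le_INR; apply/leP; rewrite plusE; lia.
lra.
Qed.
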